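(* There is an absolute constant $c>0$ such that the following holds. Let $2\le k\le d$ be integers, let $g:\{\pm1\}^k\to\{\pm1\}$ be monotone, let $f:\{\pm1\}^d\to\{\pm1\}$ be $f(x)=g(x_1,\dots,x_k)$, and let $\mathcal D$ be the distribution of $(\mathbf x,f(\mathbf x))$ with $\mathbf x$ uniform on $\{\pm1\}^d$. Then the class $\mathcal H=\{\mathrm{proj}_i:i\in[d]\}$, $\mathrm{proj}_i(x)=x_i$, satisfies the $\gamma$-weak learning assumption with respect to $\mathcal D$ with $\gamma=c\log k/k$.
   Context: A function is monotone if $g(x)\le g(y)$ whenever $x_i\le y_i$ for all $i$. A distribution $\mathcal D'$ is induced by conditioning $\mathcal D$ on $\mathcal H$ if it equals $\mathcal D$ conditioned on an event $h_1(\mathbf x)=b_1,\dots,h_m(\mathbf x)=b_m$ of positive probability with $h_j\in\mathcal H$, $b_j\in\{\pm1\}$, $m\ge0$. $\mathcal H$ satisfies the $\gamma$-weak learning assumption w.r.t. $\mathcal D$ if for every induced $\mathcal D'$ there is $h\in\mathcal H$ with $|\mathrm{Cov}_{\mathcal D'}[h(\mathbf x),\mathbf y]|\ge\gamma\,\mathrm{Var}_{\mathcal D'}[\mathbf y]$. *)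

(* Defs.v *)
From HB Require Import structures.
From mathcomp Require Import all_boot all_order all_algebra.
From mathcomp Require Import Rstruct.
From Stdlib Require Rdefinitions Rpower.
Set Implicit Arguments. Unset Strict Implicit. Unset Printing Implicit Defensive.
Import Order.TTheory GRing.Theory Num.Theory.
Local Open Scope ring_scope.
Notation R := Rdefinitions.R.

(* Points of {±1}^n, encoded as boolean vectors: true = +1, false = -1. *)
Definition cube (n : nat) := {ffun 'I_n -> bool}.

Definition pm (b : bool) : R := if b then 1 else -1.

Definition monotone_pm (k : nat) (g : cube k -> bool) : Prop :=
  forall x y : cube k, (forall i, pm (x i) <= pm (y i)) -> pm (g x) <= pm (g y).

Definition junta (k d : nat) (hkd : (k <= d)%N) (g : cube k -> bool) (x : cube d) : bool :=
  g [ffun i : 'I_k => x (widen_ord hkd i)].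

Definition proj (d : nat) (i : 'I_d) (x : cube d) : R := pm (x i).

Definition induced_event (d : nat) (I : Type) (h : I -> cube d -> R)
  (s : seq (I * bool)) : {set cube d} :=
  [set x | all (fun p => h p.1 x == pm p.2) s].

(* Expectation under D conditioned on E (x uniform on {±1}^d, hence uniform on E) *)
Definition cexp (d : nat) (E : {set cube d}) (F : cube d -> R) : R :=
  (\sum_(x in E) F x) / #|E|%:R.

Definition ccov (d : nat) (E : {set cube d}) (F G : cube d -> R) : R :=
  cexp E (fun x => F x * G x) - cexp E F * cexp E G.

Definition cvar (d : nat) (E : {set cube d}) (F : cube d -> R) : R :=
  cexp E (fun x => F x ^+ 2) - cexp E F ^+ 2.

(* gamma-weak learning assumption for the class {h i | i : I} w.r.t. the distribution
   of (x, y(x)), x uniform on {±1}^d: for every induced (positive-probability,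
   i.e. nonempty) conditioning event there is a hypothesis with
   |Cov[h(x), y]| >= gamma * Var[y]. *)
Definition weak_learning (d : nat) (I : Type) (h : I -> cube d -> R)
  (y : cube d -> R) (gamma : R) : Prop :=
  forall s : seq (I * bool), induced_event h s != set0 ->
    exists i : I, gamma * cvar (induced_event h s) y
                  <= `|ccov (induced_event h s) (h i) y|.

(* Main.v *)
Require Import Defs.
From HB Require Import structures.
From mathcomp Require Import all_boot all_order all_algebra.
From mathcomp Require Import Rstruct.
From mathcomp Require Import ring lra.
From Stdlib Require Rdefinitions Rpower Rtrigo_def Exp_prop.
Set Implicit Arguments. Unset Strict Implicit. Unset Printing Implicit Defensive.
Import Order.TTheory GRing.Theory Num.Theory.
Local Open Scope ring_scope.

Definition flip (d : nat) (j : 'I_d) (x : cube d) : cube d :=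
  [ffun i => if i == j then ~~ x i else x i].

Lemma flipK d (j : 'I_d) : involutive (flip j).
Proof. by move=> x; apply/ffunP => i; rewrite !ffunE; case: eqP => // ->; rewrite negbK. Qed.

Lemma flip_inj d (j : 'I_d) : injective (flip j).
Proof. exact: inv_inj (@flipK d j). Qed.

Lemma flipE d (j : 'I_d) x i : flip j x i = if i == j then ~~ x i else x i.
Proof. by rewrite ffunE. Qed.

Lemma pmN b : pm (~~ b) = - pm b.
Proof. by case: b; rewrite /pm ?opprK. Qed.

Lemma pm2 b : pm b * pm b = 1.
Proof. by case: b; rewrite /pm ?mulrNN mulr1. Qed.

Lemma pm_inj : injective pm.
Proof. by move=> [] [] //; rewrite /pm => h; lra. Qed.

Lemma sq_le (R : realFieldType) (x y : R) : 0 <= y -> x ^+ 2 <= y ^+ 2 -> x <= y.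
Proof.
move=> y0 h; case: (lerP x 0) => [x0|x0]; first exact: le_trans x0 y0.
by rewrite -(ler_sqr (ltW x0) y0) ?inE ?(ltW x0) //.
Qed.
Lemma bonami_arith (R : realFieldType) (Aq Ar X Q Rr b a : R) : 0 <= Q -> 0 <= Rr -> 0 <= X -> 0 <= Aq -> 0 <= Ar -> 0 <= a ->
  Aq <= b * Q ^+ 2 -> Ar <= a * Rr ^+ 2 -> X ^+ 2 <= Aq * Ar ->
  (b = 9 * a \/ (Rr = 0 /\ b = 1)) -> Aq + 6 * X + Ar <= b * (Q + Rr) ^+ 2.
Proof.
move=> hQ hR hX hAq hAr ha h1 h2 h3 [hb|[hR0 hb]].
  have hXb : X <= 3 * a * Q * Rr.
    apply: sq_le; first by rewrite !mulr_ge0 // ler0n.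
    apply: (le_trans h3).
    have e : (3 * a * Q * Rr) ^+ 2 = (9 * a * Q ^+ 2) * (a * Rr ^+ 2) by ring.
    rewrite e; apply: ler_pM => //; by rewrite -hb.
  have e2 : b * (Q + Rr) ^+ 2 = 9 * a * Q ^+ 2 + 6 * (3 * a * Q * Rr) + a * Rr ^+ 2 + 8 * (a * Rr ^+ 2).
    rewrite hb; ring.
  have h4 : 0 <= a * Rr ^+ 2 by rewrite mulr_ge0 // sqr_ge0.
  rewrite e2; rewrite hb in h1. lra.
subst Rr b.
have hAr0 : Ar = 0 by apply/le_anti; rewrite hAr andbT; move: h2; rewrite expr0n /= mulr0.
rewrite hAr0 mulr0 in h3.
have hX0 : X = 0 by apply/le_anti; rewrite hX andbT; apply: sq_le => //; rewrite expr0n.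
rewrite hAr0 hX0 addr0 mul1r in h1 *; lra.
Qed.

Lemma kkl_arith (R : realFieldType) (G H K I A4 b dl e : R) :
  0 <= G -> G <= H -> 0 <= K -> 0 <= I -> 0 <= b -> 0 <= e ->
  H ^+ 2 <= K * I -> K ^+ 2 <= A4 * I -> A4 <= b * G ^+ 2 -> I <= dl -> b * dl <= e ^+ 2 ->
  G <= e * I.
Proof.
move=> hG hGH hK hI hb he h1 h2 h3 h4 h5.
have hH : 0 <= H := le_trans hG hGH.
have s1 : G ^+ 4 <= H ^+ 4 by rewrite lerXn2r // ?nnegrE.
have s2 : H ^+ 4 <= K ^+ 2 * I ^+ 2.
  have -> : H ^+ 4 = (H ^+ 2) ^+ 2 by rewrite -exprM.
  rewrite -exprMn lerXn2r // ?nnegrE ?exprn_even_ge0 ?mulr_ge0 //.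
have s3 : K ^+ 2 * I ^+ 2 <= A4 * I * I ^+ 2 by rewrite ler_wpM2r // exprn_even_ge0.
have s4 : A4 * I * I ^+ 2 <= b * G ^+ 2 * I * I ^+ 2.
  by rewrite ler_wpM2r ?exprn_even_ge0 // ler_wpM2r.
have s5 : G ^+ 2 * G ^+ 2 <= G ^+ 2 * (b * I ^+ 3).
  have -> : G ^+ 2 * G ^+ 2 = G ^+ 4 by rewrite -exprD.
  have -> : G ^+ 2 * (b * I ^+ 3) = b * G ^+ 2 * I * I ^+ 2 by ring.
  by apply: (le_trans s1); apply: (le_trans s2); apply: (le_trans s3).
case: (eqVneq G 0) => [->|nG]; first by rewrite mulr_ge0.
have s6 : G ^+ 2 <= b * I ^+ 3.
  by rewrite -(ler_pM2l (x := G ^+ 2)) // exprn_gt0 // lt_def nG hG.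
apply: sq_le; first by rewrite mulr_ge0.
apply: (le_trans s6).
have -> : (e * I) ^+ 2 = e ^+ 2 * I ^+ 2 by ring.
have -> : b * I ^+ 3 = (b * I) * I ^+ 2 by ring.
rewrite ler_wpM2r ?exprn_even_ge0 //.
apply: le_trans h5; by rewrite ler_wpM2l.
Qed.

Section Fourier.
Variable d : nat.
Variable E : {set cube d}.
Variable U : {set 'I_d}.
Hypothesis x0E : exists x0, x0 \in E.
Hypothesis HUflip : forall j x, j \in U -> x \in E -> flip j x \in E.
Hypothesis HnU : forall j x y, j \notin U -> x \in E -> y \in E -> x j = y j.

Definition av (f : cube d -> R) := cexp E f.

Lemma cardE_gt0 : (0 < #|E|)%N.
Proof. by case: x0E => x xE; apply/card_gt0P; exists x. Qed.

Lemma cardE_neq0 : (#|E|%:R : R) != 0.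
Proof. by rewrite pnatr_eq0 -lt0n cardE_gt0. Qed.

Lemma av_ext f g : (forall x, x \in E -> f x = g x) -> av f = av g.
Proof. by move=> h; rewrite /av /cexp; congr (_ / _); apply: eq_bigr. Qed.

Lemma avD f g : av (fun x => f x + g x) = av f + av g.
Proof. by rewrite /av /cexp big_split /= mulrDl. Qed.

Lemma avZ c f : av (fun x => c * f x) = c * av f.
Proof. by rewrite /av /cexp -mulr_sumr -mulrA. Qed.

Lemma avN f : av (fun x => - f x) = - av f.
Proof. by rewrite /av /cexp sumrN mulNr. Qed.

Lemma avB f g : av (fun x => f x - g x) = av f - av g.
Proof. by rewrite avD avN. Qed.

Lemma avC c : av (fun _ => c) = c.
Proof.
rewrite /av /cexp sumr_const -[c *+ _]mulr_natr -mulrA mulfV ?mulr1 //.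
exact: cardE_neq0.
Qed.

Lemma av_sum (I : finType) (P : pred I) (F : I -> cube d -> R) :
  av (fun x => \sum_(i | P i) F i x) = \sum_(i | P i) av (F i).
Proof.
rewrite /av /cexp exchange_big /= mulr_suml; apply: eq_bigr => i _ //.
Qed.

Lemma av_ge0 f : (forall x, x \in E -> 0 <= f x) -> 0 <= av f.
Proof.
move=> h; rewrite /av /cexp divr_ge0 ?ler0n //; exact: sumr_ge0.
Qed.

Lemma av_le f g : (forall x, x \in E -> f x <= g x) -> av f <= av g.
Proof.
move=> h; rewrite -subr_ge0 -avB; apply: av_ge0 => x xE; rewrite subr_ge0; exact: h.
Qed.

Lemma av_flip j f : j \in U -> av (fun x => f (flip j x)) = av f.
Proof.
move=> jU; rewrite /av /cexp; congr (_ / _).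
rewrite [RHS](reindex_inj (@flip_inj d j)) /=; apply: eq_bigl => x.
apply/idP/idP => h; first by apply: HUflip.
by rewrite -(flipK j x); apply: HUflip.
Qed.

Lemma av_anti j f : j \in U -> (forall x, x \in E -> f (flip j x) = - f x) -> av f = 0.
Proof.
move=> jU h.
have : av f = - av f.
  rewrite -{1}(av_flip f jU) -avN; by apply: av_ext => x xE; apply: h.
move/eqP; rewrite -subr_eq0 opprK -mulr2n -mulr_natr mulf_eq0 pnatr_eq0 orbF.
by move/eqP.
Qed.

Lemma av_sq0 f : av (fun x => f x ^+ 2) = 0 -> forall x, x \in E -> f x = 0.
Proof.
rewrite /av /cexp => /eqP; rewrite mulf_eq0 invr_eq0 (negbTE cardE_neq0) orbF.
move=> /eqP /psumr_eq0P h x xE.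
by have /eqP := h (fun y _ => sqr_ge0 (f y)) x xE; rewrite sqrf_eq0 => /eqP.
Qed.

Lemma av_CS f g : av (fun x => f x * g x) ^+ 2 <= av (fun x => f x ^+ 2) * av (fun x => g x ^+ 2).
Proof.
rewrite /av /cexp.
set n := #|E|%:R.
have n0 : 0 < n by rewrite ltr0n cardE_gt0.
rewrite expr_div_n mulf_div ler_pM2r; last by rewrite invr_gt0 exprn_gt0.
set A := \sum_(x in E) f x ^+ 2.
set B := \sum_(x in E) g x ^+ 2.
set C := \sum_(x in E) f x * g x.
have h : 0 <= \sum_(x in E) \sum_(y in E) (f x * g y - f y * g x) ^+ 2.
  by apply: sumr_ge0 => x _; apply: sumr_ge0 => y _; exact: sqr_ge0.
have e : \sum_(x in E) \sum_(y in E) (f x * g y - f y * g x) ^+ 2 = 2 * (A * B) - 2 * C ^+ 2.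
  have e1 : \sum_(x in E) \sum_(y in E) f x ^+ 2 * g y ^+ 2 = A * B.
    by rewrite /A mulr_suml; apply: eq_bigr => x _; rewrite mulr_sumr.
  have e2 : \sum_(x in E) \sum_(y in E) f y ^+ 2 * g x ^+ 2 = A * B.
    by rewrite /A /B mulrC mulr_suml; apply: eq_bigr => x _; rewrite mulr_sumr; apply: eq_bigr => y _; rewrite mulrC.
  have e3 : \sum_(x in E) \sum_(y in E) 2 * ((f x * g x) * (f y * g y)) = 2 * C ^+ 2.
    rewrite /C expr2 mulr_suml mulr_sumr; apply: eq_bigr => x _.
    by rewrite mulr_sumr mulr_sumr; apply: eq_bigr => y _; ring.
  transitivity (A * B + A * B - 2 * C ^+ 2); last by ring.
  rewrite -{1}e1 -e2 -e3 -big_split -sumrB; apply: eq_bigr => x _.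
  rewrite -big_split -sumrB; apply: eq_bigr => y _ /=; ring.
lra.
Qed.


Definition chi (S x : cube d) : R := \prod_j (if S j then pm (x j) else 1).
Definition subU (S : cube d) := [forall j, S j ==> (j \in U)].
Definition fh (f : cube d -> R) S := av (fun x => f x * chi S x).
Definition empt : cube d := [ffun => false].

Lemma chi_flip j S x : chi S (flip j x) = if S j then - chi S x else chi S x.
Proof.
rewrite /chi (bigD1 j) // [in RHS](bigD1 j) //= flipE eqxx.
have -> : \prod_(i | i != j) (if S i then pm (flip j x i) else 1) =
          \prod_(i | i != j) (if S i then pm (x i) else 1).
  by apply: eq_bigr => i /negbTE ij; rewrite flipE ij.
by case: (S j); rewrite ?pmN ?mulNr.
Qed.

Lemma chi_flipS j S x : chi (flip j S) x = pm (x j) * chi S x.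
Proof.
rewrite /chi (bigD1 j) // [in RHS](bigD1 j) //= flipE eqxx.
have -> : \prod_(i | i != j) (if flip j S i then pm (x i) else 1) =
          \prod_(i | i != j) (if S i then pm (x i) else 1).
  by apply: eq_bigr => i /negbTE ij; rewrite flipE ij.
by case: (S j) => /=; rewrite ?mulr1 ?mul1r // mulrA pm2 mul1r.
Qed.

Lemma chi2 S x : chi S x * chi S x = 1.
Proof.
rewrite /chi -big_split /=; apply: big1 => i _; case: (S i); rewrite ?pm2 ?mulr1 //.
Qed.

Lemma chi_empt x : chi empt x = 1.
Proof. by rewrite /chi; apply: big1 => i _; rewrite ffunE. Qed.

Lemma subU_empt : subU empt.
Proof. by apply/forallP => i; rewrite ffunE. Qed.

Lemma subUP S j : subU S -> S j -> j \in U.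
Proof. by move=> /forallP /(_ j) /implyP. Qed.

Lemma av_chi S : subU S -> S != empt -> av (chi S) = 0.
Proof.
move=> sS nS.
have [j Sj] : exists j, S j.
  apply/existsP; apply: contraR nS => /existsPn h; apply/eqP/ffunP => i.
  by rewrite ffunE; apply/negbTE/h.
apply: (av_anti (subUP sS Sj)) => x _; by rewrite chi_flip Sj.
Qed.

Lemma orth S T : subU S -> subU T -> av (fun x => chi S x * chi T x) = (S == T)%:R.
Proof.
move=> sS sT; case: eqP => [<-|nST].
  by rewrite (av_ext (g := fun _ => 1)) ?avC // => x _; rewrite chi2.
have [j Sj] : exists j, S j != T j.
  apply/existsP; apply: contraR (introN eqP nST) => /existsPn h; apply/eqP/ffunP => i.
  by apply/eqP; rewrite -[_ == _]negbK; apply: h.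
have jU : j \in U.
  by move: Sj; case Sj': (S j); case Tj: (T j) => // _; [apply: (subUP sS) | apply: (subUP sT)].
apply: (av_anti jU) => x _; rewrite !chi_flip.
by move: Sj; case: (S j); case: (T j) => //= _; rewrite ?mulNr ?mulrN.
Qed.

Definition Ncst : R := \prod_(j : 'I_d) (1 + (j \in U)%:R).

Lemma kerE x y : x \in E -> y \in E ->
  \sum_(S | subU S) chi S x * chi S y = (x == y)%:R * Ncst.
Proof.
move=> xE yE.
have -> : \sum_(S | subU S) chi S x * chi S y =
   \prod_(j : 'I_d) (1 + (j \in U)%:R * (pm (x j) * pm (y j))).
  have e : forall j : 'I_d, 1 + (j \in U)%:R * (pm (x j) * pm (y j)) =
    \sum_(b : bool) (if b then (j \in U)%:R * (pm (x j) * pm (y j)) else 1).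
    by move=> j; rewrite big_bool /= addrC.
  rewrite (eq_bigr _ (fun j _ => e j)) bigA_distr_bigA /= big_mkcond /=.
  apply: eq_bigr => S _; case: ifP => sS.
    rewrite /chi -big_split /=; apply: eq_bigr => i _; case Si: (S i); last by rewrite mulr1.
    by rewrite (subUP sS Si) mul1r.
  move/negbT: sS => /forallPn [j]; rewrite negb_imply => /andP [Sj njU].
  by rewrite (bigD1 j) //= Sj (negbTE njU) !mul0r.
case: eqP => [<-|nxy].
  rewrite mul1r /Ncst; apply: eq_bigr => i _; by rewrite pm2 mulr1.
have [j xj] : exists j, x j != y j.
  apply/existsP; apply: contraR (introN eqP nxy) => /existsPn h; apply/eqP/ffunP => i.
  by apply/eqP; rewrite -[_ == _]negbK; apply: h.
have jU : j \in U by apply: contraR xj => njU; rewrite (HnU njU xE yE).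
rewrite mul0r (bigD1 j) //= jU mul1r.
by move: xj; case: (x j); case: (y j) => //= _; rewrite /pm ?mulrN ?mulNr mulr1 subrr mul0r.
Qed.

Lemma expand0 f x : x \in E ->
  \sum_(S | subU S) fh f S * chi S x = (Ncst / #|E|%:R) * f x.
Proof.
move=> xE.
transitivity (av (fun y => f y * \sum_(S | subU S) chi S y * chi S x)).
  rewrite (av_ext (g := fun y => \sum_(S | subU S) (chi S x) * (f y * chi S y))); last first.
    by move=> y _; rewrite mulr_sumr; apply: eq_bigr => S _; ring.
  by rewrite av_sum; apply: eq_bigr => S _; rewrite avZ mulrC.
rewrite (av_ext (g := fun y => (y == x)%:R * (f y * Ncst))); last first.
  by move=> y yE; rewrite kerE // mulrCA.
rewrite /av /cexp (bigD1 x) //= eqxx mul1r big1 ?addr0; last first.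
  by move=> y /andP [_ /negbTE ->]; rewrite mul0r.
by rewrite -mulrA mulrC.
Qed.

Lemma Ncst_card : Ncst / #|E|%:R = 1.
Proof.
case: x0E => x xE.
have := expand0 (fun _ => 1) xE; rewrite mulr1 => <-.
rewrite (bigD1 empt) ?subU_empt //= big1 ?addr0.
  rewrite chi_empt mulr1 /fh (av_ext (g := fun _ => 1)) ?avC // => y _.
  by rewrite chi_empt mulr1.
move=> S /andP [sS nS]; rewrite /fh (av_ext (g := chi S)) ?av_chi ?mul0r //.
by move=> y _; rewrite mul1r.
Qed.

Lemma expand f x : x \in E -> f x = \sum_(S | subU S) fh f S * chi S x.
Proof. by move=> xE; rewrite expand0 // Ncst_card mul1r. Qed.

Lemma planch f g : av (fun x => f x * g x) = \sum_(S | subU S) fh f S * fh g S.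
Proof.
rewrite (av_ext (g := fun x => \sum_(S | subU S) fh f S * (chi S x * g x))); last first.
  by move=> x xE; rewrite {1}(expand f xE) mulr_suml; apply: eq_bigr => S _; rewrite mulrA.
rewrite av_sum; apply: eq_bigr => S _; rewrite avZ /fh; congr (_ * _).
by apply: av_ext => x _; rewrite mulrC.
Qed.

Lemma fh_comb (c : cube d -> R) T : subU T ->
  fh (fun x => \sum_(S | subU S) c S * chi S x) T = c T.
Proof.
move=> sT; rewrite /fh.
rewrite (av_ext (g := fun x => \sum_(S | subU S) c S * (chi S x * chi T x))); last first.
  by move=> x _; rewrite mulr_suml; apply: eq_bigr => S _; rewrite mulrA.
rewrite av_sum (bigD1 T) //= avZ orth // eqxx mulr1 big1 ?addr0 //.
by move=> S /andP [sS nST]; rewrite avZ orth // (negbTE nST) mulr0.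
Qed.


Definition sz (S : cube d) : nat := (\sum_j (S j : nat))%N.
Definition Dv (j : 'I_d) (f : cube d -> R) (x : cube d) : R := pm (x j) * (f x - f (flip j x)) / 2.
Definition Inf (j : 'I_d) (f : cube d -> R) := av (fun x => Dv j f x ^+ 2).

Lemma sz0 S : (sz S == 0)%N = (S == empt).
Proof.
rewrite /sz sum_nat_eq0; apply/forallP/eqP => [h|->].
  by apply/ffunP => i; rewrite ffunE; move: (h i) => /=; case: (S i).
by move=> i; rewrite ffunE.
Qed.

Lemma sz_flip (j : 'I_d) (S : cube d) : ~~ S j -> sz (flip j S) = (sz S).+1.
Proof.
move=> Sj; rewrite /sz (bigD1 j) // [in RHS](bigD1 j) //= flipE eqxx (negbTE Sj) /=.
congr (_ + _)%N; apply: eq_bigr => i /negbTE ij; by rewrite flipE ij.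
Qed.

Lemma subU_flip (j : 'I_d) (S : cube d) : j \in U -> subU (flip j S) = subU S.
Proof.
move=> jU; apply/forallP/forallP => h i; have := h i; rewrite ?flipE;
  case: eqP => [->|_] //; by rewrite jU !implybT.
Qed.

Lemma Dv_flip (j : 'I_d) f (x : cube d) : Dv j f (flip j x) = Dv j f x.
Proof. rewrite /Dv flipK flipE eqxx pmN. ring. Qed.

Lemma av_odd (j : 'I_d) (h : cube d -> R) : j \in U -> (forall x, h (flip j x) = h x) ->
  av (fun x => pm (x j) * h x) = 0.
Proof.
move=> jU hh; apply: (av_anti jU) => x _; by rewrite hh flipE eqxx pmN mulNr.
Qed.

Lemma av_Dv (j : 'I_d) f (h : cube d -> R) : j \in U -> (forall x, h (flip j x) = h x) ->
  av (fun x => Dv j f x * h x) = av (fun x => pm (x j) * f x * h x).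
Proof.
move=> jU hh.
set k := fun x : cube d => pm (x j) * f (flip j x) * h x.
rewrite (av_ext (g := fun x => 2^-1 * (pm (x j) * f x * h x) - 2^-1 * k x)); last first.
  by move=> x _; rewrite /Dv /k; ring.
rewrite avB !avZ.
have -> : av k = - av (fun x => pm (x j) * f x * h x).
  rewrite -(av_flip k jU) -avN; apply: av_ext => x _.
  by rewrite /k flipK hh flipE eqxx pmN !mulNr.
lra.
Qed.

Lemma fh_Dv (j : 'I_d) f (S : cube d) : j \in U -> fh (Dv j f) S = if S j then 0 else fh f (flip j S).
Proof.
move=> jU; rewrite /fh; case Sj: (S j).
  apply: (av_anti jU) => x _; by rewrite Dv_flip chi_flip Sj mulrN.
rewrite av_Dv //; last by move=> x; rewrite chi_flip Sj.
by apply: av_ext => x _; rewrite chi_flipS mulrA [pm _ * f x]mulrC.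
Qed.

Lemma reindex_flip (j : 'I_d) (P : pred (cube d)) (a : cube d -> R) : j \in U ->
  \sum_(S | subU S && ~~ S j && P S) a (flip j S) =
  \sum_(S | subU S && S j && P (flip j S)) a S.
Proof.
move=> jU; rewrite [RHS](reindex_inj (@flip_inj d j)) /=; apply: eq_big => S.
  by rewrite subU_flip // flipE eqxx flipK.
by [].
Qed.

Lemma Inf_fourier (j : 'I_d) f : j \in U -> Inf j f = \sum_(S | subU S && S j) fh f S ^+ 2.
Proof.
move=> jU; rewrite /Inf (av_ext (g := fun x => Dv j f x * Dv j f x)); last first.
  by move=> x _; rewrite expr2.
rewrite planch.
transitivity (\sum_(S | subU S && ~~ S j && predT S) fh f (flip j S) ^+ 2).
  rewrite big_mkcondr /= big_mkcondr /=; apply: eq_bigr => S _; rewrite fh_Dv //.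
  by case: (S j); rewrite ?mul0r // expr2.
rewrite (reindex_flip predT (fun S => fh f S ^+ 2)) //; apply: eq_bigl => S; by rewrite andbT.
Qed.

Definition lowdeg (m t : nat) (p : cube d -> R) := forall S, subU S -> fh p S != 0 ->
  (forall i : 'I_d, S i -> (i < m)%N) /\ (sz S <= t)%N.

Lemma pow4E (a q r : R) : a * a = 1 ->
  (q + a * r) ^+ 4 = q ^+ 4 + 6 * (q ^+ 2 * r ^+ 2) + r ^+ 4 + a * (4 * (q ^+ 3 * r) + 4 * (q * r ^+ 3)).
Proof.
move=> h.
have e : (q + a * r) ^+ 4 - (q ^+ 4 + 6 * (q ^+ 2 * r ^+ 2) + r ^+ 4 + a * (4 * (q ^+ 3 * r) + 4 * (q * r ^+ 3)))
  = (a * a - 1) * (6 * (q ^+ 2 * r ^+ 2) + 4 * a * q * r ^+ 3 + (a * a + 1) * r ^+ 4) by ring.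
by move: e; rewrite h subrr mul0r => /eqP; rewrite subr_eq0 => /eqP.
Qed.

Lemma pow2E (a q r : R) : a * a = 1 ->
  (q + a * r) ^+ 2 = q ^+ 2 + r ^+ 2 + a * (2 * (q * r)).
Proof.
move=> h.
have e : (q + a * r) ^+ 2 - (q ^+ 2 + r ^+ 2 + a * (2 * (q * r))) = (a * a - 1) * r ^+ 2 by ring.
by move: e; rewrite h subrr mul0r => /eqP; rewrite subr_eq0 => /eqP.
Qed.


Lemma nempt_ex S : S != empt -> exists i, S i.
Proof.
move=> nS; apply/existsP; apply: contraR nS => /existsPn h; apply/eqP/ffunP => i.
by rewrite ffunE; apply/negbTE/h.
Qed.

Lemma lowdeg_const t p : lowdeg 0 t p -> forall x, x \in E -> p x = fh p empt.
Proof.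
move=> hp x xE; rewrite (expand p xE) (bigD1 empt) ?subU_empt //= chi_empt mulr1 big1 ?addr0 //.
move=> S /andP [sS nS]; case: (eqVneq (fh p S) 0) => [->|nz]; first by rewrite mul0r.
have [i Si] := nempt_ex nS; have [h1 _] := hp S sS nz; by have := h1 i Si.
Qed.

Lemma fh_sym (j : 'I_d) p S : j \in U ->
  fh (fun x => (p x + p (flip j x)) / 2) S = if S j then 0 else fh p S.
Proof.
move=> jU; rewrite /fh.
rewrite (av_ext (g := fun x => 2^-1 * (p x * chi S x) + 2^-1 * (p (flip j x) * chi S x))); last first.
  by move=> x _; ring.
rewrite avD !avZ.
have -> : av (fun x => p (flip j x) * chi S x) = av (fun x => p x * chi S (flip j x)).
  rewrite -(av_flip (fun x => p x * chi S (flip j x)) jU); apply: av_ext => x _; by rewrite flipK.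
rewrite (av_ext (f := fun x => p x * chi S (flip j x)) (g := fun x => (if S j then -1 else 1) * (p x * chi S x))); last first.
  by move=> x _; rewrite chi_flip; case: (S j); rewrite ?mulN1r ?mul1r ?mulrN.
rewrite avZ; case: (S j); lra.
Qed.

Lemma bonami m : (m <= d)%N -> forall t p, lowdeg m t p ->
  av (fun x => p x ^+ 4) <= 9 ^+ t * av (fun x => p x ^+ 2) ^+ 2.
Proof.
elim: m => [|m IH] hm t p hp.
  have hc := lowdeg_const hp.
  rewrite (av_ext (g := fun _ => fh p empt ^+ 4)); last by move=> x xE; rewrite hc.
  rewrite (av_ext (g := fun _ => fh p empt ^+ 2) (f := fun x => p x ^+ 2)); last by move=> x xE; rewrite hc.
  rewrite !avC -exprM /=.
  rewrite ler_peMl ?exprn_ege1 //; first by apply: exprn_even_ge0.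
  lra.
have hm' : (m < d)%N by [].
set j := Ordinal hm'.
case jU : (j \in U); last first.
  apply: IH; first exact: ltnW.
  move=> S sS nz; have [h1 h2] := hp S sS nz; split => // i Si.
  have := h1 i Si; rewrite ltnS leq_eqVlt => /orP [/eqP e|//].
  have ij : i = j by apply: val_inj.
  by move: (subUP sS Si); rewrite ij jU.
set q := fun x => (p x + p (flip j x)) / 2.
set r := Dv j p.
have hpq : forall x, p x = q x + pm (x j) * r x.
  move=> x; rewrite /q /r /Dv !mulrA pm2 mul1r; lra.
have hq : forall x, q (flip j x) = q x by move=> x; rewrite /q flipK addrC.
have hr : forall x, r (flip j x) = r x by move=> x; rewrite /r Dv_flip.
have lq : lowdeg m t q.
  move=> S sS; rewrite /q fh_sym //; case Sj: (S j); first by rewrite eqxx.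
  move=> nz; have [h1 h2] := hp S sS nz; split => // i Si.
  have := h1 i Si; rewrite ltnS leq_eqVlt => /orP [/eqP e|//].
  have ij : i = j by apply: val_inj.
  by move: Si; rewrite ij Sj.
have fhr : forall S, subU S -> fh r S != 0 ->
    [/\ ~~ S j, subU (flip j S), fh p (flip j S) != 0 & (sz S).+1 = sz (flip j S)].
  move=> S sS; rewrite /r fh_Dv //; case Sj: (S j); first by rewrite eqxx.
  move=> nz; split => //; first by rewrite subU_flip.
  by rewrite sz_flip // Sj.
have lr : lowdeg m t.-1 r.
  move=> S sS nz; have [nSj sS' nz' esz] := fhr S sS nz.
  have [h1 h2] := hp _ sS' nz'; split; last by rewrite -esz in h2; case: t h2 {hp lq} => // t.
  move=> i Si; have ij : i != j by apply: contraNneq nSj => <-.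
  have := h1 i; rewrite flipE (negbTE ij) => /(_ Si).
  rewrite ltnS leq_eqVlt => /orP [/eqP e|//].
  by move: ij; rewrite -(inj_eq val_inj) /= e eqxx.
have hp4 : av (fun x => p x ^+ 4) = av (fun x => q x ^+ 4) + 6 * av (fun x => q x ^+ 2 * r x ^+ 2)
    + av (fun x => r x ^+ 4).
  rewrite (av_ext (g := fun x => (q x ^+ 4 + 6 * (q x ^+ 2 * r x ^+ 2) + r x ^+ 4) +
     pm (x j) * (4 * (q x ^+ 3 * r x) + 4 * (q x * r x ^+ 3)))); last first.
    by move=> x _; rewrite hpq pow4E // pm2.
  rewrite avD av_odd // ?addr0; last by move=> x; rewrite hq hr.
  by rewrite !avD avZ.
have hp2 : av (fun x => p x ^+ 2) = av (fun x => q x ^+ 2) + av (fun x => r x ^+ 2).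
  rewrite (av_ext (g := fun x => (q x ^+ 2 + r x ^+ 2) + pm (x j) * (2 * (q x * r x)))); last first.
    by move=> x _; rewrite hpq pow2E // pm2.
  rewrite avD av_odd // ?addr0; last by move=> x; rewrite hq hr.
  by rewrite avD.
have IHq := IH (ltnW hm) t q lq.
have IHr := IH (ltnW hm) t.-1 r lr.
have CS : av (fun x => q x ^+ 2 * r x ^+ 2) ^+ 2 <= av (fun x => q x ^+ 4) * av (fun x => r x ^+ 4).
  have := av_CS (fun x => q x ^+ 2) (fun x => r x ^+ 2).
  rewrite (av_ext (f := fun x => (q x ^+ 2) ^+ 2) (g := fun x => q x ^+ 4)); last by move=> x _; rewrite -exprM.
  rewrite (av_ext (f := fun x => (r x ^+ 2) ^+ 2) (g := fun x => r x ^+ 4)) //; by move=> x _; rewrite -exprM.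
have ge0 : forall f : cube d -> R, (forall x, 0 <= f x) -> 0 <= av f.
  by move=> f hf; apply: av_ge0 => x _.
have e2 : forall z : R, 0 <= z ^+ 2 by move=> z; apply: exprn_even_ge0.
have e4 : forall z : R, 0 <= z ^+ 4 by move=> z; apply: exprn_even_ge0.
rewrite hp4 hp2; apply: (bonami_arith (a := 9 ^+ t.-1)) => //;
  try (by apply: ge0 => x; first [apply: mulr_ge0; apply: exprn_even_ge0 | apply: exprn_even_ge0]).
  by rewrite exprn_ge0 //; lra.
case: t IHq IHr lq lr hp => [|t] _ _ _ _ hp; [right; split => // | left; by rewrite exprS].
rewrite (av_ext (g := fun x => r x * r x)); last by move=> x _; rewrite expr2.
rewrite planch big1 // => S sS; case: (eqVneq (fh r S) 0) => [->|nz]; first by rewrite mul0r.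
have [_ sS' nz' e] := fhr S sS nz; have [_ h] := hp _ sS' nz'.
by rewrite -e in h.
Qed.


Lemma sum_exch (w : cube d -> R) (P : pred (cube d)) :
  \sum_(j in U) \sum_(S | subU S && S j && P S) w S = \sum_(S | subU S && P S) (sz S)%:R * w S.
Proof.
transitivity (\sum_(j in U) \sum_(S | subU S) (if S j && P S then w S else 0)).
  by apply: eq_bigr => j _; rewrite -big_mkcondr; apply: eq_bigl => S; rewrite andbA.
rewrite exchange_big /= big_mkcondr /=; apply: eq_bigr => S sS.
case: (P S); last by rewrite big1 // => j _; rewrite andbF.
rewrite /sz natr_sum mulr_suml big_mkcond /=; apply: eq_bigr => j _.
case Sj: (S j); last by rewrite mul0r; case: (j \in U).
by rewrite (subUP sS Sj) mul1r.
Qed.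

Lemma Dv_vals (y : cube d -> R) j x : (forall x, y x = 1 \/ y x = -1) ->
  [\/ Dv j y x = 0, Dv j y x = 1 | Dv j y x = -1].
Proof.
move=> hy; rewrite /Dv; case: (hy x) => ->; case: (hy (flip j x)) => ->;
  case: (x j); rewrite /pm; [constructor 1|constructor 1|constructor 2|constructor 3|
    constructor 3|constructor 2|constructor 1|constructor 1]; lra.
Qed.

Lemma kkl (y : cube d -> R) (delta eps : R) (t : nat) :
  (forall x, y x = 1 \/ y x = -1) ->
  (forall j, j \in U -> Inf j y <= delta) -> 0 <= eps -> 9 ^+ t * delta <= eps ^+ 2 ->
  cvar E y <= (eps + (t.+2%:R)^-1) * \sum_(j in U) Inf j y.
Proof.
move=> hy hdl heps hde.
have ge0 : forall f : cube d -> R, (forall x, 0 <= f x) -> 0 <= av f.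
  by move=> f hf; apply: av_ge0 => x _.
have sq0 : forall z : R, 0 <= z ^+ 2 by move=> z; apply: exprn_even_ge0.
have hvar : cvar E y = \sum_(S | subU S && (S != empt)) fh y S ^+ 2.
  have -> : cvar E y = av (fun x => y x ^+ 2) - av y ^+ 2 by [].
  rewrite (av_ext (g := fun x => y x * y x)); last by move=> x _; rewrite expr2.
  rewrite planch (bigD1 empt) ?subU_empt //=.
  have -> : av y = fh y empt by rewrite /fh; apply: av_ext => x _; rewrite chi_empt mulr1.
  rewrite expr2 addrC addrK; apply: eq_bigr => S _; by rewrite expr2.
pose G j := \sum_(S | subU S && S j && (sz S <= t.+1)%N) fh y S ^+ 2.
have hG : forall j, j \in U -> G j <= eps * Inf j y.
  move=> j jU.
  set D := Dv j y.
  set g := fun x => \sum_(S | subU S) (if (sz S <= t)%N then fh D S else 0) * chi S x.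
  have fhg : forall S, subU S -> fh g S = if (sz S <= t)%N then fh D S else 0.
    by move=> S sS; rewrite /g fh_comb.
  set Gg := av (fun x => g x ^+ 2).
  have hGg : Gg = \sum_(S | subU S) (if (sz S <= t)%N then fh D S else 0) ^+ 2.
    rewrite /Gg (av_ext (g := fun x => g x * g x)); last by move=> x _; rewrite expr2.
    by rewrite planch; apply: eq_bigr => S sS; rewrite fhg // expr2.
  have hGD : av (fun x => g x * D x) = Gg.
    rewrite planch hGg; apply: eq_bigr => S sS; rewrite fhg //.
    by case: ifP => _; rewrite expr2 ?mul0r.
  have hGG : Gg = G j.
    rewrite hGg.
    transitivity (\sum_(S | subU S && ~~ S j && (fun S => sz S <= t)%N S) fh y (flip j S) ^+ 2).
      rewrite big_mkcondr /= big_mkcondr /=.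
      apply: eq_bigr => S _; rewrite /D fh_Dv //.
      by case: (S j); case: (sz S <= t)%N; rewrite ?expr0n.
    rewrite (reindex_flip _ (fun S => fh y S ^+ 2)) //; apply: eq_bigl => S /=.
    case Sj: (S j); rewrite ?andbF ?andbT //.
    have e : sz S = (sz (flip j S)).+1.
      by rewrite -{1}(flipK j S) sz_flip // flipE eqxx Sj.
    by rewrite e.
  have lg : lowdeg d t g.
    move=> S sS; rewrite fhg //; case: ifP => [h _|]; last by rewrite eqxx.
    by split=> // i _; apply: ltn_ord.
  have B := bonami (leqnn d) lg.
  have hDv := fun x => Dv_vals j x hy.
  set a := fun x => D x ^+ 2.
  have haa : forall x, a x * a x = a x.
    by move=> x; rewrite /a /D; case: (hDv x) => ->; rewrite ?expr0n ?mulr0 //= ?expr1n ?mulr1 // sqrrN expr1n mulr1.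
  have hgD : forall x, g x * D x <= `|g x| * a x.
    move=> x; rewrite /a /D; case: (hDv x) => ->; rewrite ?expr0n ?mulr0 //= ?expr1n ?mulr1 ?ler_norm //.
    by rewrite sqrrN expr1n mulr1 mulrN1 -normrN ler_norm.
  set H := av (fun x => `|g x| * a x).
  set K := av (fun x => g x ^+ 2 * a x).
  have hI : Inf j y = av a by [].
  have c1 : H ^+ 2 <= K * Inf j y.
    have := av_CS (fun x => `|g x| * a x) a.
    rewrite (av_ext (f := fun x => `|g x| * a x * a x) (g := fun x => `|g x| * a x)); last first.
      by move=> x _; rewrite -mulrA haa.
    rewrite (av_ext (f := fun x => (`|g x| * a x) ^+ 2) (g := fun x => g x ^+ 2 * a x)); last first.
      by move=> x _; rewrite exprMn real_normK ?num_real // [a x ^+ 2]expr2 haa.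
    rewrite (av_ext (f := fun x => a x ^+ 2) (g := a)) //; by move=> x _; rewrite expr2 haa.
  have c2 : K ^+ 2 <= av (fun x => g x ^+ 4) * Inf j y.
    have := av_CS (fun x => g x ^+ 2) a.
    rewrite (av_ext (f := fun x => (g x ^+ 2) ^+ 2) (g := fun x => g x ^+ 4)); last first.
      by move=> x _; rewrite -exprM.
    rewrite (av_ext (f := fun x => a x ^+ 2) (g := a)) //; by move=> x _; rewrite expr2 haa.
  rewrite -hGG; apply: (kkl_arith (H := H) (K := K) (A4 := av (fun x => g x ^+ 4)) (b := 9 ^+ t) (dl := delta)) => //.
  - by rewrite /Gg; apply: ge0 => x; apply: sq0.
  - by rewrite -hGD; apply: av_le => x _; apply: hgD.
  - by rewrite /K; apply: ge0 => x; apply: mulr_ge0; apply: sq0.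
  - by rewrite hI; apply: ge0 => x; apply: sq0.
  - by rewrite exprn_ge0 //; lra.
  - by apply: hdl.
have hInf : \sum_(j in U) Inf j y = \sum_(S | subU S && predT S) (sz S)%:R * fh y S ^+ 2.
  rewrite -sum_exch; apply: eq_bigr => j jU; rewrite Inf_fourier //; apply: eq_bigl => S.
  by rewrite andbT.
have hGs : \sum_(j in U) G j = \sum_(S | subU S && (fun S => sz S <= t.+1)%N S) (sz S)%:R * fh y S ^+ 2.
  by rewrite -sum_exch.
have hvb : cvar E y <= \sum_(j in U) G j + (t.+2%:R)^-1 * \sum_(j in U) Inf j y.
  rewrite hvar hGs hInf !big_mkcondr /= mulr_sumr -big_split /=; apply: ler_sum => S _.
  have c0 : 0 <= fh y S ^+ 2 := sq0 _.
  have t2 : 0 < t.+2%:R :> R by rewrite ltr0n.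
  case: (eqVneq S empt) => [->|nS].
    have -> : sz empt = 0%N by apply/eqP; rewrite sz0.
    by rewrite mul0r mulr0 addr0.
  have s1 : (1 <= sz S)%N by rewrite lt0n sz0.
  case: leqP => hs.
    have : 1 <= (sz S)%:R :> R by rewrite ler1n.
    move=> h1; have : 0 <= (t.+2%:R)^-1 * ((sz S)%:R * fh y S ^+ 2).
      by apply: mulr_ge0; [rewrite invr_ge0 ler0n | apply: mulr_ge0; [apply: ler0n | apply: sq0]].
    move=> h2; have : fh y S ^+ 2 <= (sz S)%:R * fh y S ^+ 2 by rewrite ler_peMl.
    by rewrite /= => h3; apply: (le_trans h3); rewrite lerDl.
  rewrite add0r mulrA; rewrite ler_peMl // -(ler_pM2l t2) mulrA mulfV ?mul1r ?mulr1 ?gt_eqF //.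
  by rewrite ler_nat.
have hGe : \sum_(j in U) G j <= eps * \sum_(j in U) Inf j y.
  by rewrite mulr_sumr; apply: ler_sum => j jU; apply: hG.
by rewrite mulrDl; apply: (le_trans hvb); rewrite lerD2r.
Qed.

End Fourier.

Local Notation ln := Rpower.ln.
Local Notation exp := Rtrigo_def.exp.
Lemma ln_facts (n t : nat) : (2 <= n)%N -> (n < 81 ^ t.+1)%N ->
  0 < ln n%:R /\ ln n%:R < t.+1%:R * ln 81%:R /\ ln 81%:R < 80 /\ ln n%:R ^+ 6 <= 6 ^+ 6 * n%:R.
Proof.
move=> h2 h81.
have lnlt : forall x y : R, 0 < x -> x < y -> ln x < ln y.
  by move=> x y /RltP hx /RltP hxy; apply/RltP; exact: Rpower.ln_increasing.
have ln1 : ln 1 = 0 by have := Rpower.ln_1; rewrite !RealsE.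
have expln : forall x : R, 0 < x -> exp (ln x) = x.
  by move=> x /RltP hx; exact: Rpower.exp_ln.
have expD : forall x y : R, exp (x + y) = exp x * exp y.
  by move=> x y; have := Exp_prop.exp_plus x y; rewrite !RealsE.
have expi : forall x : R, x != 0 -> 1 + x < exp x.
  move=> x /eqP hx; apply/RltP; have := Rpower.exp_ineq1 x hx; by rewrite !RealsE.
have lnpow : forall (x : R) k, 0 < x -> ln (x ^+ k) = k%:R * ln x.
  by move=> x k /RltP hx; have := Rpower.ln_pow x hx k; rewrite !RealsE.
have n1 : 1 < n%:R :> R by rewrite ltr1n.
have H0 : 0 < ln n%:R by rewrite -ln1; apply: lnlt => //; lra.
split => //; split.
  rewrite -lnpow ?ltr0n //; apply: lnlt; first lra.
  by rewrite -natrX ltr_nat.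
have l81 : 0 < ln 81%:R by rewrite -ln1; apply: lnlt => //; rewrite ?ltr1n ?ltr0n.
split.
  have := expi _ (lt0r_neq0 l81); rewrite expln ?ltr0n //; lra.
set y := ln n%:R / 6.
have hy : 0 < y by rewrite /y; lra.
have e : y < exp y by have := expi y (lt0r_neq0 hy); lra.
have ex : n%:R = exp y ^+ 6.
  rewrite -{1}(expln n%:R); last lra.
  have -> : ln n%:R = y + y + y + y + y + y by rewrite /y; lra.
  by rewrite !expD; ring.
have lx : ln n%:R = 6 * y by rewrite /y; lra.
rewrite lx ex exprMn ler_wpM2l ?exprn_ge0 //.
by rewrite lerXn2r // ?nnegrE; lra.
Qed.

Lemma arith1 (k L V b9 : R) : 0 < k -> 0 < L -> 0 <= V -> V <= 1 -> 0 <= b9 -> b9 ^+ 2 <= k ->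
  L ^+ 6 <= 6 ^+ 6 * k ->
  b9 * (1000^-1 * L / k * V) <= (4 * 1000^-1 * L)^-1 ^+ 2.
Proof.
move=> hk hL hV0 hV1 hb hbk hL6.
set u := 1000^-1 * L.
have hu : 0 < u by rewrite /u; lra.
set w := u * V.
have hw0 : 0 <= w by rewrite /w mulr_ge0 //; lra.
have hwu : w <= u by rewrite /w ler_piMr //; lra.
have e1 : 1000^-1 * L / k * V = w / k by rewrite /w /u; field; lra.
rewrite e1.
have hu6 : 256 * u ^+ 6 <= k.
  have -> : u ^+ 6 = 1000^-1 ^+ 6 * L ^+ 6 by rewrite /u exprMn.
  have : 1000^-1 ^+ 6 * L ^+ 6 <= 1000^-1 ^+ 6 * (6 ^+ 6 * k) by rewrite ler_wpM2l // exprn_ge0 //; lra.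
  have : 0 < 1000^-1 :> R by lra.
  move=> h0 h1; have h2 : 256 * (1000^-1 ^+ 6 * (6 ^+ 6 * k)) <= k.
    have -> : 256 * (1000^-1 ^+ 6 * (6 ^+ 6 * k)) = (256 * 6 ^+ 6 / 1000 ^+ 6) * k.
      by rewrite exprVn; field; lra.
    rewrite ler_piMl //; last lra.
    lra.
  lra.
set X := 16 * u ^+ 2 * b9 * w.
have hX0 : 0 <= X by rewrite /X !mulr_ge0 // ?sqr_ge0 //; lra.
have hXk : X <= k.
  apply: sq_le; first lra.
  have -> : X ^+ 2 = 256 * u ^+ 4 * b9 ^+ 2 * w ^+ 2 by rewrite /X; ring.
  have h1 : w ^+ 2 <= u ^+ 2 by rewrite lerXn2r // ?nnegrE //; lra.
  have h2 : 256 * u ^+ 4 * b9 ^+ 2 * w ^+ 2 <= 256 * u ^+ 4 * k * u ^+ 2.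
    rewrite ler_pM //; first by rewrite !mulr_ge0 // ?exprn_ge0 //; lra.
    - by rewrite exprn_even_ge0.
    - by rewrite ler_wpM2l // !mulr_ge0 ?exprn_ge0 //; lra.
  apply: (le_trans h2).
  have -> : 256 * u ^+ 4 * k * u ^+ 2 = (256 * u ^+ 6) * k by ring.
  rewrite expr2 ler_wpM2r //; lra.
have e2 : (4 * u)^-1 ^+ 2 = (16 * u ^+ 2)^-1 by rewrite exprVn; congr (_^-1); ring.
have -> : (4 * 1000^-1 * L)^-1 = (4 * u)^-1 by rewrite /u mulrA.
rewrite e2.
have pu : 0 < 16 * u ^+ 2 by rewrite mulr_gt0 ?exprn_gt0 //; lra.
rewrite -(ler_pM2l pu) mulfV ?gt_eqF //.
rewrite -(ler_pM2r hk) mul1r.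
have -> : 16 * u ^+ 2 * (b9 * (w / k)) * k = X by rewrite /X; field; lra.
exact: hXk.
Qed.

Lemma arith2 (k L V T l81 : R) : 0 < k -> 0 < L -> 0 <= V -> 0 < T -> L < T * l81 -> l81 < 80 ->
  ((4 * 1000^-1 * L)^-1 + (T + 1)^-1) * (k * (1000^-1 * L / k * V)) <= V / 2.
Proof.
move=> hk hL hV hT h1 h2.
have -> : k * (1000^-1 * L / k * V) = 1000^-1 * L * V by field; lra.
rewrite mulrDl.
have -> : (4 * 1000^-1 * L)^-1 * (1000^-1 * L * V) = V / 4 by field; lra.
have h3 : L < 80 * T.
  apply: (lt_le_trans h1); rewrite mulrC ler_pM2r //; lra.
have h4 : (T + 1)^-1 * (1000^-1 * L * V) <= V / 4.
  have h5 : 1000^-1 * L <= (T + 1) / 4 by lra.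
  have h6 : 1000^-1 * L * V <= (T + 1) / 4 * V by rewrite ler_wpM2r.
  have -> : V / 4 = (T + 1)^-1 * ((T + 1) / 4 * V) by field; lra.
  by rewrite ler_wpM2l // invr_ge0; lra.
lra.
Qed.


Lemma sum_lt_k (d k : nat) (dl : R) : (k <= d)%N ->
  \sum_(j < d) (if (j < k)%N then dl else 0) = k%:R * dl.
Proof.
move=> hkd.
rewrite -(big_mkord xpredT (fun j => if (j < k)%N then dl else 0)).
rewrite (big_cat_nat (n := k)) ?leq0n //=.
rewrite (@eq_big_nat _ _ _ 0 k _ (fun _ => dl)); last by move=> i /andP [_ ->].
rewrite sumr_const_nat subn0 big1_seq ?addr0 ?mulr_natl //.
move=> i /andP [_]; rewrite mem_index_iota => /andP [hi _]; by rewrite ltnNge hi.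
Qed.

Theorem proposition4p4 :
  exists c : Rdefinitions.R, 0 < c /\
    forall (k d : nat) (hk : (2 <= k)%N) (hkd : (k <= d)%N) (g : cube k -> bool),
      monotone_pm g ->
      weak_learning (@proj d) (fun x => pm (junta hkd g x))
        (c * Rpower.ln (k%:R) / k%:R).
Proof.
exists (1000^-1); split; first lra.
move=> k d hk hkd g mono s Hne.
set E := induced_event (@proj d) s.
set y := fun x => pm (junta hkd g x).
set U : {set 'I_d} := [set j | ~~ has (fun p => p.1 == j) s].
have inE' : forall x, (x \in E) = all (fun p => proj p.1 x == pm p.2) s by move=> x; rewrite inE.
have x0E : exists x0, x0 \in E by move/set0Pn: Hne.
have HUflip : forall j x, j \in U -> x \in E -> flip j x \in E.
  move=> j x; rewrite inE => hj; rewrite !inE' => /allP hx; apply/allP => p ps.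
  have hxp := hx p ps; rewrite /proj flipE; case: (p.1 =P j) => [e|_]; last by [].
  by move/hasPn: hj => /(_ p ps) /=; rewrite e eqxx.
have HnU : forall j x z, j \notin U -> x \in E -> z \in E -> x j = z j.
  move=> j x z; rewrite inE negbK => /hasP [p ps /eqP pj]; rewrite !inE' => /allP hx /allP hz.
  have := hx p ps; have := hz p ps; rewrite /proj pj => /eqP e1 /eqP e2.
  by apply: pm_inj; rewrite e2 e1.
have hy : forall x, y x = 1 \/ y x = -1.
  by move=> x; rewrite /y /pm; case: (junta _ _ _); [left|right].
have ymono : forall x z : cube d, (forall i, pm (x i) <= pm (z i)) -> y x <= y z.
  by move=> x z h; apply: mono => i; rewrite !ffunE; exact: h.
have Dv_ge0 : forall j x, 0 <= Dv j y x.
  move=> j x; rewrite /Dv; case Xj: (x j).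
    have : y (flip j x) <= y x.
      apply: ymono => i; rewrite flipE; case: eqP => [->|_]; last by [].
      by rewrite Xj /pm /=; lra.
    by rewrite /pm /=; lra.
  have : y x <= y (flip j x).
    apply: ymono => i; rewrite flipE; case: eqP => [->|_]; last by [].
    by rewrite Xj /pm /=; lra.
  by rewrite /pm /=; lra.
have Dv01 : forall j x, Dv j y x * Dv j y x = Dv j y x.
  move=> j x; have := Dv_ge0 j x; case: (Dv_vals j x hy) => ->; rewrite ?mulr0 ?mulr1 //.
  lra.
have Dv_hi : forall (j : 'I_d) x, (k <= j)%N -> Dv j y x = 0.
  move=> j x hj; rewrite /Dv.
  have -> : y (flip j x) = y x.
    rewrite /y /junta; congr (pm (g _)); apply/ffunP => i; rewrite !ffunE ?flipE.
    case: eqP => // e; exfalso.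
    have := ltn_ord i; have -> : (val i) = val (widen_ord hkd i) by [].
    by rewrite e ltnNge hj.
  by rewrite subrr mulr0 mul0r.
set L := Rpower.ln k%:R.
set V := cvar E y.
case: (boolP [exists i : 'I_d, 1000^-1 * L / k%:R * V <= `|ccov E (proj i) y|]) => [/existsP [i hi]|hno].
  by exists i.
exfalso.
have hlt : forall i, `|ccov E (proj i) y| < 1000^-1 * L / k%:R * V.
  by move=> i; move/existsPn: hno => /(_ i); rewrite ltNge.
have hy2 : forall x, y x ^+ 2 = 1 by move=> x; case: (hy x) => ->; rewrite ?expr1n ?sqrrN ?expr1n.
have hVe : V = 1 - av E y ^+ 2.
  have -> : V = av E (fun x => y x ^+ 2) - av E y ^+ 2 by [].
  by rewrite (av_ext (g := fun _ => 1)) ?avC // => x _; rewrite hy2.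
have hV1 : V <= 1 by rewrite hVe; have := sqr_ge0 (av E y); lra.
have hV0 : 0 <= V.
  rewrite hVe; have := av_CS x0E y (fun _ => 1).
  rewrite (av_ext (f := fun x => y x * 1) (g := y)); last by move=> x _; rewrite mulr1.
  rewrite (av_ext (f := fun x => y x ^+ 2) (g := fun _ => 1)); last by move=> x _; rewrite hy2.
  rewrite (av_ext (f := fun x => 1 ^+ 2) (g := fun _ => 1)); last by move=> x _; rewrite expr1n.
  rewrite !avC // mulr1; lra.
have hcov : forall j, j \in U -> ccov E (proj j) y = Inf E j y.
  move=> j jU.
  have -> : ccov E (proj j) y = av E (fun x => proj j x * y x) - av E (proj j) * av E y by [].
  have -> : av E (proj j) = 0.
    rewrite -(@av_odd _ _ _ HUflip j (fun _ => 1) jU) //.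
    by apply: av_ext => x _; rewrite mulr1.
  rewrite mul0r subr0.
  rewrite (av_ext (f := fun x => proj j x * y x) (g := fun x => pm (x j) * y x * 1)); last first.
    by move=> x _; rewrite mulr1.
  rewrite -(@av_Dv _ _ _ HUflip j y (fun _ => 1) jU) //.
  rewrite /Inf; apply: av_ext => x _; by rewrite mulr1 expr2 Dv01.
have Inf_ge0 : forall j, 0 <= Inf E j y.
  by move=> j; apply: av_ge0 => x _; apply: sqr_ge0.
set t := trunc_log 81 k.
have k0 : (0 < k)%N by apply: leq_trans hk.
have /andP [hb1 hb2] : (81 ^ t <= k < 81 ^ t.+1)%N by apply: trunc_log_bounds.
have [hL0 [hLt [hl81 hL6]]] := ln_facts hk hb2.
rewrite -/L in hL0 hLt hL6.
have hk0 : 0 < k%:R :> R by rewrite ltr0n.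
set dl := 1000^-1 * L / k%:R * V.
have hdl0 : 0 <= dl.
  by rewrite /dl mulr_ge0 // divr_ge0 ?mulr_ge0 ?ler0n //; [lra | exact: ltW].
have hInf : forall j, j \in U -> Inf E j y <= dl.
  move=> j jU; rewrite -hcov //; apply: ltW; apply: le_lt_trans (hlt j); exact: ler_norm.
have hsum : \sum_(j in U) Inf E j y <= k%:R * dl.
  rewrite -(sum_lt_k dl hkd) big_mkcond /=; apply: ler_sum => j _.
  case: ifP => jU; case: ltnP => hj //.
  - exact: hInf.
  - by rewrite /Inf (av_ext (g := fun _ => 0)) ?avC // => x _; rewrite Dv_hi // expr0n.
set eps := (4 * 1000^-1 * L)^-1.
have heps : 0 <= eps by rewrite /eps invr_ge0; lra.
have hb9 : (9 ^+ t : R) ^+ 2 <= k%:R.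
  have e81 : (9 : R) ^+ 2 = 81 by rewrite expr2; lra.
  have -> : (9 ^+ t : R) ^+ 2 = (81 ^ t)%:R by rewrite -exprM mulnC exprM natrX e81.
  by rewrite ler_nat.
have hde : 9 ^+ t * dl <= eps ^+ 2.
  apply: arith1 => //; by rewrite exprn_ge0 //; lra.
have hK := kkl x0E HUflip HnU hy hInf heps hde.
have hT : 0 < t.+1%:R :> R by rewrite ltr0n.
have h2 : t.+2%:R = t.+1%:R + 1 :> R by rewrite -addn1 natrD.
have hfin : V <= V / 2.
  apply: (le_trans hK); rewrite h2.
  apply: le_trans (arith2 hk0 hL0 hV0 hT hLt hl81).
  rewrite ler_wpM2l //; first by rewrite addr_ge0 // invr_ge0; lra.
have V0 : V = 0 by lra.
have := hlt (Ordinal (leq_trans (isT : (0 < 2)%N) (leq_trans hk hkd))).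
rewrite V0 mulr0 => h; have := normr_ge0 (ccov E (proj (Ordinal (leq_trans (isT : (0 < 2)%N) (leq_trans hk hkd)))) y).
lra.
Qed.
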